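(* Let $a_{1}<a_{2}<a_{3}<\cdots$ be a strictly increasing infinite sequence of positive integers, let $A=\{a_{1},a_{2},a_{3},\ldots\}$, and let $n>0$ be an integer such that: (1) whenever $m>n$, there exist indices $i<r\leq s<j$ with $a_{m}=a_{i}+a_{j}=a_{r}+a_{s}$; and (2) whenever $a=a_{i}+a_{j}=a_{r}+a_{s}>a_{n}$ for some indices $i<r<s<j$, then $a=a_{m}$ for some $m>n$. Then $A$ is eventually linear, i.e., there exist integers $N$ and $k\geq 1$ such that for all integers $x>N$, $x\in A$ if and only if $k\mid x$. *)

(* Defs.v *)
From mathcomp Require Import all_boot.
Set Implicit Arguments.
Unset Strict Implicit.
Unset Printing Implicit Defensive.

(* The sequence a_1 < a_2 < ... is a : nat -> nat with indices starting at 1;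
   the value a 0 is irrelevant and never used. *)
Definition inA (a : nat -> nat) (x : nat) : Prop := exists i, 1 <= i /\ a i = x.

(* Main.v *)
Require Import Defs.
From Stdlib Require Import Classical.
From mathcomp Require Import all_boot zify.
Set Implicit Arguments.
Unset Strict Implicit.
Unset Printing Implicit Defensive.

Lemma mono_a (a : nat -> nat) (hinc : forall i, 1 <= i -> a i < a i.+1) :
  forall i j, 1 <= i -> i < j -> a i < a j.
Proof.
move=> i j hi; elim: j => [//|j IH] hij.
rewrite ltnS leq_eqVlt in hij; case/orP: hij => [/eqP <-|hij]; first exact: hinc.
apply: ltn_trans (IH hij) (hinc _ _); exact: leq_trans hi (ltnW hij).
Qed.

Lemma idx_lt (a : nat -> nat) (hinc : forall i, 1 <= i -> a i < a i.+1) i j :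
  1 <= i -> 1 <= j -> a i < a j -> i < j.
Proof.
move=> hi hj hlt; case: (ltngtP i j) => // h.
  by have := mono_a hinc hj h; rewrite ltnNge ltnW.
by move: hlt; rewrite h ltnn.
Qed.

Lemma sum_count (T : eqType) (b : pred T) (s : seq T) :
  \sum_(x <- s) (b x : nat) = count b s.
Proof. by elim: s => [|x s IH]; rewrite ?big_nil ?big_cons //= IH. Qed.

Lemma sum_lb (T : eqType) (F : T -> nat) (c : nat) (s : seq T) :
  (forall x, x \in s -> c <= F x) -> c * size s <= \sum_(x <- s) F x.
Proof.
elim: s => [|x s IH] h; first by rewrite muln0.
rewrite big_cons /= mulnS leq_add //; first by apply: h; rewrite inE eqxx.
by apply: IH => y hy; apply: h; rewrite inE hy orbT.
Qed.

Lemma sum_ub (T : eqType) (F : T -> nat) (c : nat) (s : seq T) :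
  (forall x, x \in s -> F x <= c) -> \sum_(x <- s) F x <= c * size s.
Proof.
elim: s => [|x s IH] h; first by rewrite muln0 big_nil.
rewrite big_cons /= mulnS leq_add //; first by apply: h; rewrite inE eqxx.
by apply: IH => y hy; apply: h; rewrite inE hy orbT.
Qed.

Lemma count_le2 (T : eqType) (b : pred T) (s : seq T) :
  uniq s ->
  (forall x y z, x \in s -> y \in s -> z \in s -> x != y -> y != z -> x != z ->
     b x -> b y -> b z -> False) ->
  count b s <= 2.
Proof.
move=> us h; rewrite -size_filter.
have uf : uniq (filter b s) by apply: filter_uniq.
case E: (filter b s) uf => [|x [|y [|z l]]] //= /and4P [].
rewrite !inE !negb_or => /and3P [xy xz _] /andP [yz _] _ _.
have mx : x \in filter b s by rewrite E inE eqxx.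
have my : y \in filter b s by rewrite E !inE eqxx orbT.
have mz : z \in filter b s by rewrite E !inE eqxx !orbT.
rewrite !mem_filter in mx my mz.
case/andP: mx => bx sx; case/andP: my => byy sy; case/andP: mz => bz sz.
exfalso; exact: (h x y z sx sy sz xy yz xz bx byy bz).
Qed.

Lemma fin_choice (T : Type) (x0 : T) (R : nat -> T -> Prop) (Q : nat -> Prop) :
  (forall m, Q m -> exists x, R m x) -> forall K, exists f : nat -> T, forall m, m < K -> Q m -> R m (f m).
Proof.
move=> H; elim=> [|K [f hf]]; first by exists (fun _ => x0).
case: (classic (Q K)) => hQ.
  have [x hx] := H K hQ.
  exists (fun m => if m == K then x else f m) => m hm Qm.
  have [->|ne] := eqVneq m K; first by [].
  
  apply: hf => //.
  by rewrite ltnS leq_eqVlt (negbTE ne) in hm.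
exists f => m hm Qm.
rewrite ltnS leq_eqVlt in hm; case/orP: hm => [/eqP e|hmK]; last exact: hf hmK Qm.
by rewrite e in Qm.
Qed.

Lemma classic_min (R : nat -> Prop) : (exists j, R j) -> exists k, R k /\ forall i, i < k -> ~ R i.
Proof.
move=> [j Rj]; elim: j {-2}j (leqnn j) Rj => [|N IH] j hj Rj.
  exists j; split => // i hi; lia.
case: (classic (exists i, i < j /\ R i)) => [[i [hi Ri]]|hno].
  by apply: (IH i) => //; lia.
exists j; split => // i hi Ri; apply: hno; by exists i.
Qed.
Lemma le_mulD (C D : nat) : 0 < D -> C <= C * D.
Proof. by move=> hD; rewrite leq_pmulr. Qed.

Lemma endgame (P : nat -> Prop) (c0 D y0 : nat)
  (H2 : forall w x y z, P w -> P x -> P y -> P z -> w < x -> x < y -> y < z ->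
        w + z = x + y -> c0 < w + z -> P (w + z))
  (hD : 0 < D) (hAP : forall k, P (y0 + k * D)) :
  exists N k, 1 <= k /\ forall x, N < x -> (P x <-> k %| x).
Proof.
pose F s := exists C, forall v, C <= v -> v %% D = s %% D -> P v.
have Fmod : forall s s', s %% D = s' %% D -> F s -> F s'.
  by move=> s s' e [C hC]; exists C => v hv hm; apply: hC => //; rewrite hm e.
have Fy0 : F y0.
  exists y0 => v hv hm.
  have hd : D %| v - y0 by rewrite -eqn_mod_dvd // hm.
  have -> : v = y0 + (v - y0) %/ D * D by rewrite divnK // subnKC.
  exact: hAP.
have FD : forall s1 s2, F s1 -> F s2 -> F (s1 + s2).
  move=> s1 s2 [C1 h1] [C2 h2].
  pose y1 := s1 + C1 * D.
  have y1m : y1 %% D = s1 %% D by rewrite /y1 addnC modnMDl.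
  have y1C : C1 <= y1 by rewrite /y1; apply: leq_trans (le_mulD C1 hD) (leq_addl _ _).
  exists (2 * y1 + C2 + 3 * D + c0 + 1) => v hv hm.
  have [y2 ev] : exists y2, v = y1 + y2 by exists (v - y1); rewrite subnKC //; clear -hv; lia.
  rewrite ev in hv hm *.
  have y2m : y2 %% D = s2 %% D.
    move: hm; rewrite -modnDml y1m modnDml => /eqP; rewrite eqn_modDl; by move/eqP.
  have Py1 : P y1 by apply: h1.
  have Py1D : P (y1 + D) by apply: h1; [clear -y1C; lia | rewrite modnDr].
  have Py2 : P y2 by apply: h2 => //; clear -hv; lia.
  have hDy2 : D <= y2 by clear -hv; lia.
  have Py2D : P (y2 - D).
    apply: h2; first by clear -hv; lia.
    by rewrite -y2m -[in RHS](subnK hDy2) modnDr.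
  have := H2 _ _ _ _ Py1 Py1D Py2D Py2.
  by apply; clear -hv hD; lia.
have Fmul : forall j, F (j.+1 * y0).
  elim => [|j IH]; first by rewrite mul1n.
  by rewrite mulSn; apply: FD.
have F0 : F 0.
  apply: (Fmod (D * y0)); last by have := Fmul D.-1; rewrite prednK.
  by rewrite mod0n mulnC modnMl.
case: F0 => C0 hC0.
have L4 : forall z z', z < z' -> P z -> P z' -> z %% D = z' %% D -> F z.
  move=> z z' hzz' Pz Pz' ezz.
  exists (2 * z' + C0 + c0 + 1) => v hv hm.
  have hz'v : z' <= v by clear -hv; lia.
  have hzv : z <= v by clear -hv hzz'; lia.
  have d1 : (v - z') %% D = 0 %% D.
    have hd : D %| v - z' by rewrite -eqn_mod_dvd // hm ezz.
    by rewrite mod0n; apply/eqP.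
  have d2 : (v - z) %% D = 0 %% D.
    have hd : D %| v - z by rewrite -eqn_mod_dvd // hm.
    by rewrite mod0n; apply/eqP.
  have P1 : P (v - z') by apply: hC0 => //; clear -hv; lia.
  have P2 : P (v - z) by apply: hC0 => //; clear -hv hzz'; lia.
  have -> : v = z + (v - z) by clear -hzv; lia.
  by apply: (H2 _ _ _ _ Pz Pz' P1 P2); clear -hv hzz'; lia.
pose G s N := (forall w, N <= w -> w %% D = s -> P w) \/ (forall w, P w -> w %% D = s -> w < N).
have Gmono : forall s N N', G s N -> N <= N' -> G s N'.
  move=> s N N' [h|h] hN; [left|right] => w.
    by move=> hw; apply: h; apply: leq_trans hN hw.
  by move=> Pw hw; apply: leq_trans (h w Pw hw) hN.
have Gone : forall s, exists N, G s N.
  move=> s.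
  case: (classic (exists z z', [/\ z < z', P z, P z', z %% D = s & z' %% D = s])).
    move=> [z [z' [hzz' Pz Pz' e1 e2]]].
    have [C hC] := L4 z z' hzz' Pz Pz' (etrans e1 (esym e2)).
    by exists C; left => w hw hm; apply: hC => //; rewrite hm e1.
  move=> hno.
  case: (classic (exists z, P z /\ z %% D = s)).
    move=> [z [Pz ez]]; exists z.+1; right => w Pw ew.
    case: (ltngtP w z) => h.
    - by rewrite ltnS ltnW.
    - exfalso; apply: hno; by exists z, w.
    - by rewrite h.
  move=> hno2; exists 0; right => w Pw ew; exfalso; apply: hno2; by exists w.
have Gall : forall K, exists N, forall s, s < K -> G s N.
  elim => [|K [N hN]]; first by exists 0.
  have [N' hN'] := Gone K.
  exists (maxn N N') => s hs.
  case: (ltngtP s K) => h.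
  - apply: (Gmono _ N); [exact: hN | exact: leq_maxl].
  - by move: hs; rewrite ltnS leqNgt h.
  - rewrite h; apply: (Gmono _ N'); [exact: hN' | exact: leq_maxr].
have [N1 HN1] := Gall D.
pose Q s := forall w, N1 <= w -> w %% D = s %% D -> P w.
have Qa : forall v, N1 <= v -> P v -> Q v.
  move=> v hv Pv.
  case: (HN1 (v %% D) (ltn_pmod v hD)) => h.
    by move=> w hw hm; apply: h.
  by have := h v Pv erefl; rewrite ltnNge hv.
have QF : forall s, F s -> Q s.
  move=> s [C hC].
  case: (HN1 (s %% D) (ltn_pmod s hD)) => h; first by move=> w hw hm; apply: h.
  exfalso.
  pose w := s %% D + (C + N1) * D.
  have ew : w %% D = s %% D by rewrite /w addnC modnMDl modn_mod.
  have hw1 : C + N1 <= w by rewrite /w; apply: leq_trans (le_mulD (C + N1) hD) (leq_addl _ _).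
  have Pw : P w by apply: hC => //; clear -hw1; lia.
  by have := h w Pw ew; clear -hw1; lia.
have QtoF : forall s, Q s -> F s by move=> s h; exists N1.
have Qmod : forall s s', s %% D = s' %% D -> Q s -> Q s'.
  by move=> s s' e h w hw hm; apply: h => //; rewrite hm e.
have Qadd : forall s1 s2, Q s1 -> Q s2 -> Q (s1 + s2).
  by move=> s1 s2 h1 h2; apply: QF; apply: FD; apply: QtoF.
have Q0 : Q 0 by apply: QF; exists C0.
have Qmul : forall m k, Q k -> Q (m * k).
  move=> m k hk; elim: m => [|m IH]; first by rewrite mul0n.
  by rewrite mulSn; apply: Qadd.
have [k [[k0 Qk] kmin]] : exists k, (0 < k /\ Q k) /\ forall i, i < k -> ~ (0 < i /\ Q i).
  apply: classic_min; exists D; split => //.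
  by apply: (Qmod 0) => //; rewrite modnn mod0n.
have Qdvd : forall s, Q s -> k %| s.
  move=> s Qs.
  set q := s %/ k; set r := s %% k.
  have E : s + D.-1 * q * k = q * k * D + r.
    rewrite {1}(divn_eq s k) -/q -/r.
    have -> : q * k * D = q * k * D.-1.+1 by rewrite prednK.
    rewrite mulnS [D.-1 * q * k]mulnC mulnA; clear; lia.
  have Qt : Q (s + D.-1 * q * k) by apply: Qadd => //; apply: Qmul.
  have Qr : Q r by apply: (Qmod _ _ _ Qt); rewrite E modnMDl.
  case: (posnP r) => hr; first by rewrite /dvdn -/r hr.
  exfalso; apply: (kmin r); [exact: ltn_pmod | by split].
exists N1, k; split => // x hx; split => [Px|hk].
  by apply: Qdvd; apply: Qa => //; apply: ltnW.
have : Q x by rewrite -(divnK hk); apply: Qmul.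
by move=> h; apply: h => //; apply: ltnW.
Qed.
Lemma stage1 (a : nat -> nat) (n : nat)
  (hpos : forall i, 1 <= i -> 0 < a i)
  (hinc : forall i, 1 <= i -> a i < a i.+1)
  (hn : 0 < n)
  (h1 : forall m, n < m ->
     exists i r s j, [/\ 1 <= i, i < r, r <= s, s < j &
        a m = a i + a j /\ a m = a r + a s])
  (NS : forall p D t, inA a p -> inA a D -> inA a t -> inA a (D - p) -> inA a (t - p) ->
     p < D -> D < t -> a n < t -> t - p = D) : False.
Proof.
pose K := 3 * n + 4.
pose R m (x : nat * nat * nat) := [/\ 1 <= x.1.1, x.1.1 < x.1.2, x.1.2 < x.2 & x.2 < m] /\
   [/\ inA a (a m - a x.1.1), inA a (a m - a x.1.2) & inA a (a m - a x.2)].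
have HR : forall m, n < m -> exists x, R m x.
  move=> m hm; have [i [r [s [j [hi hir hrs hsj [e1 e2]]]]]] := h1 m hm.
  exists (i, r, j); rewrite /R /=.
  have hj : 1 <= j by clear -hi hir hrs hsj; lia.
  have hm1 : 1 <= m by clear -hn hm; lia.
  have ai0 := hpos i hi.
  have hjm : j < m by apply: (idx_lt hinc) => //; rewrite e1; clear -ai0; lia.
  split; first by split => //; clear -hrs hsj; lia.
  split.
  - by exists j; split => //; rewrite e1 addnC addnK.
  - by exists s; split; [clear -hi hir hrs; lia | rewrite e2 addnC addnK].
  - by exists i; split => //; rewrite e1 addnK.
have [f hf] := fin_choice (0, 0, 0) HR K.
pose uses m p := p \in [:: (f m).1.1; (f m).1.2; (f m).2].
have Huse : forall m p, m < K -> n < m -> uses m p -> [/\ 1 <= p, p < m & inA a (a m - a p)].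
  move=> m p hmK hnm; have [[h1i h2 h3 h4] [i1 i2 i3]] := hf m hmK hnm.
  rewrite /uses !inE => /or3P [] /eqP ->; split => //; clear -h1i h2 h3 h4; lia.
have Hpair : forall m1 m2 p, m1 < K -> m2 < K -> n < m1 -> n < m2 -> m1 < m2 ->
    uses m1 p -> uses m2 p -> a m2 = a m1 + a p.
  move=> m1 m2 p hK1 hK2 hn1 hn2 h12 u1 u2.
  have [hp1 hpm1 i1] := Huse m1 p hK1 hn1 u1.
  have [hp2 hpm2 i2] := Huse m2 p hK2 hn2 u2.
  have hm1 : 1 <= m1 by clear -hn hn1; lia.
  have lt1 : a p < a m1 by apply: mono_a.
  have lt2 : a m1 < a m2 by apply: mono_a.
  have lt3 : a n < a m2 by apply: mono_a.
  have e := NS (a p) (a m1) (a m2) (ex_intro _ p (conj hp1 erefl))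
     (ex_intro _ m1 (conj hm1 erefl))
     (ex_intro _ m2 (conj (leq_trans hm1 (ltnW h12)) erefl)) i1 i2 lt1 lt2 lt3.
  clear -e lt1 lt2; lia.
pose ms := iota n.+1 (K - n.+1).
pose ps := iota 0 K.
have inms : forall m, m \in ms -> n < m /\ m < K.
  move=> m; rewrite mem_iota => /andP [h1' h2']; split => //.
  by move: h2'; rewrite subnKC //; rewrite /K; clear; lia.
pose S := \sum_(m <- ms) \sum_(p <- ps) (uses m p : nat).
have lb : 3 * size ms <= S.
  apply: sum_lb => m hm; have [hnm hmK] := inms m hm.
  rewrite sum_count -size_filter.
  have [[h1i h2 h3 h4] _] := hf m hmK hnm.
  have -> : 3 = size [:: (f m).1.1; (f m).1.2; (f m).2] by [].
  apply: uniq_leq_size.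
    by apply: (sorted_uniq ltn_trans ltnn); rewrite /= h2 h3.
  move=> x hx; rewrite mem_filter /uses hx /=.
  rewrite mem_iota /= add0n.
  by move: hx; rewrite !inE; case/or3P => /eqP ->; clear -h1i h2 h3 h4 hmK; lia.
have ub : S <= 2 * size ps.
  rewrite /S exchange_big /=; apply: sum_ub => p hp.
  rewrite sum_count; apply: count_le2; first exact: iota_uniq.
  move=> x y z hx hy hz xy yz xz ux uy uz.
  have [hnx hxK] := inms x hx; have [hny hyK] := inms y hy; have [hnz hzK] := inms z hz.
  have ap0 : 0 < a p by have [hp0 _ _] := Huse x p hxK hnx ux; apply: hpos.
  have P2 : forall u v, u \in ms -> v \in ms -> u != v -> uses u p -> uses v p ->
     a u = a v + a p \/ a v = a u + a p.
    move=> u v hu hv uv uu uv'; have [hnu huK] := inms u hu; have [hnv hvK] := inms v hv.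
    case: (ltngtP u v) => h.
    - by right; apply: Hpair.
    - by left; apply: Hpair.
    - by rewrite h eqxx in uv.
  have := P2 x y hx hy xy ux uy; have := P2 y z hy hz yz uy uz; have := P2 x z hx hz xz ux uz.
  clear -ap0; lia.
move: (leq_trans lb ub); rewrite !size_iota /K; clear; lia.
Qed.

Lemma SP (P : nat -> Prop) (c0 : nat)
  (H2 : forall w x y z, P w -> P x -> P y -> P z -> w < x -> x < y -> y < z ->
        w + z = x + y -> c0 < w + z -> P (w + z))
  (Hpos : forall v, P v -> 0 < v) p x t :
  P p -> P x -> P t -> P (x - p) -> P (t - p) -> p < x -> x < t -> t - p <> x -> c0 < t ->
  P (x + t) /\ P (x + t - p).
Proof.
move=> Pp Px Pt Pxp Ptp hpx hxt htp hc.
have p0 := Hpos p Pp.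
have step1 : P (x - p + t).
  case: (ltngtP x (t - p)) => h.
  - apply: (H2 _ _ _ _ Pxp Px Ptp Pt); clear -p0 hpx hxt h hc; lia.
    apply: (H2 _ _ _ _ Pxp Ptp Px Pt); clear -p0 hpx hxt h hc; lia.
  - by exfalso; apply: htp.
have step2 : P (p + (x - p + t)).
  apply: (H2 _ _ _ _ Pp Px Pt step1); clear -p0 hpx hxt hc; lia.
split.
  by have <- : p + (x - p + t) = x + t by clear -hpx; lia.
by have <- : x - p + t = x + t - p by clear -hpx; lia.
Qed.

Lemma stage2 (P : nat -> Prop) (c0 : nat)
  (H2 : forall w x y z, P w -> P x -> P y -> P z -> w < x -> x < y -> y < z ->
        w + z = x + y -> c0 < w + z -> P (w + z))
  (Hpos : forall v, P v -> 0 < v) p D t :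
  P p -> P D -> P t -> P (D - p) -> P (t - p) -> p < D -> D < t -> t - p <> D -> c0 < t ->
  forall k, P (D + t + k * D).
Proof.
move=> Pp PD Pt PDp Ptp hpD hDt htp hc.
have p0 := Hpos p Pp.
suff : forall k, P (D + t + k * D) /\ P (D + t + k * D - p) by move=> h k; case: (h k).
elim => [|k [IH1 IH2]].
  by rewrite mul0n addn0; apply: (SP H2 Hpos).
have := SP H2 Hpos Pp PD IH1 PDp IH2 hpD _ _ _.
have e : D + (D + t + k * D) = D + t + k.+1 * D by rewrite mulSn; clear; lia.
rewrite e; apply; clear -p0 hpD hDt hc; lia.
Qed.

Unset Implicit Arguments.

Theorem mainTheorem1 (a : nat -> nat) (n : nat)
  (hpos : forall i, 1 <= i -> 0 < a i)
  (hinc : forall i, 1 <= i -> a i < a i.+1)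
  (hn : 0 < n)
  (h1 : forall m, n < m ->
     exists i r s j, [/\ 1 <= i, i < r, r <= s, s < j &
        a m = a i + a j /\ a m = a r + a s])
  (h2 : forall i r s j, 1 <= i -> i < r -> r < s -> s < j ->
     a i + a j = a r + a s -> a n < a i + a j ->
     exists m, n < m /\ a m = a i + a j) :
  exists N k, 1 <= k /\ forall x, N < x -> (inA a x <-> k %| x).
Proof.
have Hpos : forall v, inA a v -> 0 < v by move=> v [i [hi <-]]; apply: hpos.
have H2' : forall w x y z, inA a w -> inA a x -> inA a y -> inA a z -> w < x -> x < y -> y < z ->
        w + z = x + y -> a n < w + z -> inA a (w + z).
  move=> w x y z [i [hi <-]] [r [hr <-]] [s [hs <-]] [j [hj <-]] hwx hxy hyz e hlt.
  have [m [hm em]] := h2 i r s j hi (idx_lt hinc hi hr hwx) (idx_lt hinc hr hs hxy)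
      (idx_lt hinc hs hj hyz) e hlt.
  by exists m; split => //; clear -hn hm; lia.
case: (classic (exists p D t, [/\ inA a p, inA a D, inA a t, inA a (D - p) & inA a (t - p)] /\
     [/\ p < D, D < t, t - p <> D & a n < t])) => [[p [D [t [[Pp PD Pt PDp Ptp] [h1' h2' h3' h4']]]]] | hno].
  have hD : 0 < D by apply: Hpos.
  exact: (endgame H2' hD (stage2 H2' Hpos Pp PD Pt PDp Ptp h1' h2' h3' h4')).
exfalso; apply: (stage1 hpos hinc hn h1) => p D t Pp PD Pt PDp Ptp hpD hDt hnt.
apply: NNPP => hne; apply: hno; exists p, D, t; split; split => //.
Qed.
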